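(* Let $d\ge1$, let $\mu$ be a probability measure on $(0,+\infty)$ and fix $\alpha>0$. Then, almost surely, for every $x\in\mathbb{R}^d\setminus B$, $$\frac{T(B,x)}{\|x\|}\ge \alpha\left(1-S_{\|x\|}(\xi_\alpha)-\frac{1}{\|x\|}\right).$$
   Context: $B_r$ is the closed Euclidean ball of radius $r$ centered at $0$, $B=B_1$. Let $\chi$ be a Poisson point process on $\mathbb{R}^d\times[0,+\infty)\times(0,+\infty)$ with intensity the product of Lebesgue measure on $\mathbb{R}^d\times[0,+\infty)$ and $\mu$. Passage times: $\tau(x,x)=0$; for each $(c,t,r)\in\chi$ and $y\in(c+B_r)\setminus\{c\}$, $\tau(c,y)=t$; otherwise $\tau(x,y)=+\infty$. A path is a finite sequence $\pi=(x_0,\dots,x_k)$ of distinct points of $\mathbb{R}^d$; $T(\pi)=\sum_{i=0}^{k-1}\tau(x_i,x_{i+1})$, and $T(A,x)=\inf\{T(\pi):\pi\text{ a path from some }a\in A\text{ to }x\}$. Define $\xi_\alpha=\{(c,r):\exists t\le\alpha r,\ (c,t,r)\in\chi\}$, a Poisson point process on $\mathbb{R}^d\times(0,+\infty)$ with intensity Lebesgue $\otimes\,\alpha r\mu(dr)$. For $x\in\mathbb{R}^d$, $r(x)=r$ if $(x,r)\in\xi_\alpha$ (a.s. unique), and $r(x)=0$ otherwise. For a path $\pi=(x_0,\dots,x_n)$, $|\pi|=\sum_{i=0}^{n-1}\|x_{i+1}-x_i\|$ and $A(\pi)=\sum_{i=0}^n r(x_i)$. For $l>0$, $S_l(\xi_\alpha)=\sup\{A(\pi)/|\pi|\}$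 over all paths with $x_0=0$ and $|\pi|>l$. *)

(* Defs.v *)
From HB Require Import structures.
From mathcomp Require Import all_boot all_order all_algebra.
From mathcomp Require Import all_classical all_reals all_analysis.
Set Implicit Arguments. Unset Strict Implicit. Unset Printing Implicit Defensive.
Import Order.TTheory GRing.Theory Num.Theory.
Local Open Scope classical_set_scope.
Local Open Scope ring_scope.

Section Defs.
Variables (R : realType) (d : nat).

Definition enorm (x : 'rV[R]_d) : R := Num.sqrt (\sum_(i < d) x 0 i ^+ 2).
Definition unit_ball : set 'rV[R]_d := [set x | enorm x <= 1].

(* marks (c, t, r) *)
Definition mark := ('rV[R]_d * R * R)%type.

(* Poisson probability mass function, valid also for rate 0 *)
Definition ppmf (lam : R) (k : nat) : R := expR (- lam) * lam ^+ k / k`!%:R.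

Definition box (a b : 'rV[R]_d) (s t c e : R) : set mark :=
  [set p : mark | (forall i, a 0 i <= p.1.1 0 i < b 0 i) /\
           s <= p.1.2 < t /\ c < p.2 <= e].

Definition count_eq (Omega : Type) (chi : Omega -> set mark) (A : set mark) (k : nat)
  : set Omega := [set w | ((chi w `&` A) #= `I_k)%card].

(* chi is a Poisson point process on R^d x [0,+oo) x (0,+oo) with intensity
   Leb_d (x) Leb_[0,+oo) (x) mu, described through its finite-dimensional
   distributions on (pairwise disjoint) boxes, which form a semiring
   generating the Borel sets *)
Definition is_PPP (dO : measure_display) (Omega : measurableType dO)
  (P : probability Omega R) (mu : probability R R) (chi : Omega -> set mark) :=
  (forall w, chi w `<=` [set p | 0 <= p.1.2 /\ 0 < p.2]) /\
  forall (n : nat) (a b : 'I_n -> 'rV[R]_d) (s t c e : 'I_n -> R) (k : 'I_n -> nat),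
    (forall j, (forall i, a j 0 i < b j 0 i) /\ 0 <= s j < t j /\ 0 <= c j < e j) ->
    (forall j j', j != j' ->
       box (a j) (b j) (s j) (t j) (c j) (e j) `&`
       box (a j') (b j') (s j') (t j') (c j') (e j') = set0) ->
    (forall j, measurable (count_eq chi (box (a j) (b j) (s j) (t j) (c j) (e j)) (k j))) /\
    P (\bigcap_(j in [set: 'I_n]) count_eq chi (box (a j) (b j) (s j) (t j) (c j) (e j)) (k j))
    = (\prod_(j < n) ppmf ((\prod_(i < d) (b j 0 i - a j 0 i)) * (t j - s j)
                            * fine (mu `]c j, e j]%classic)) (k j))%:E.

Local Open Scope ereal_scope.

Definition tau (chi : set mark) (x y : 'rV[R]_d) : \bar R :=
  if x == y then 0
  else ereal_inf [set t%:E | t in [set t : R | exists r, chi (x, t, r) /\ (enorm (y - x) <= r)%R]].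

Definition path_time (chi : set mark) (x0 : 'rV[R]_d) (s : seq 'rV[R]_d) : \bar R :=
  \sum_(p <- zip (x0 :: s) s) tau chi p.1 p.2.

Definition pass_time (chi : set mark) (A : set 'rV[R]_d) (x : 'rV[R]_d) : \bar R :=
  ereal_inf [set v | exists (x0 : 'rV[R]_d) (s : seq 'rV[R]_d),
     A x0 /\ uniq (x0 :: s) /\ last x0 s = x /\ v = path_time chi x0 s].

Local Close Scope ereal_scope.

Definition xi (alpha : R) (chi : set mark) : set ('rV[R]_d * R) :=
  [set cr | exists t, t <= alpha * cr.2 /\ chi (cr.1, t, cr.2)].

(* r(x): the radius attached to x in xi_alpha (a.s. unique), 0 otherwise *)
Definition rad (alpha : R) (chi : set mark) (x : 'rV[R]_d) : R :=
  xget 0 [set r | xi alpha chi (x, r)].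

Definition path_len (x0 : 'rV[R]_d) (s : seq 'rV[R]_d) : R :=
  \sum_(p <- zip (x0 :: s) s) enorm (p.2 - p.1).

Definition path_A (alpha : R) (chi : set mark) (x0 : 'rV[R]_d) (s : seq 'rV[R]_d) : R :=
  \sum_(y <- x0 :: s) rad alpha chi y.

Definition S_l (alpha : R) (chi : set mark) (l : R) : \bar R :=
  ereal_sup [set (path_A alpha chi 0 s / path_len 0 s)%:E | s in
     [set s : seq 'rV[R]_d | uniq ((0 : 'rV[R]_d) :: s) /\ l < path_len 0 s]].

End Defs.

(* Main.v *)
Require Import Defs.
From HB Require Import structures.
From mathcomp Require Import all_boot all_order all_algebra.
From mathcomp Require Import all_classical all_reals all_analysis.
From mathcomp Require Import ring lra.
Import Order.TTheory GRing.Theory Num.Theory.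
Local Open Scope classical_set_scope.
Local Open Scope ring_scope.


Lemma cs (R : realType) (n : nat) (a b : 'I_n -> R) :
  (\sum_i a i * b i) ^+ 2 <= (\sum_i a i ^+ 2) * (\sum_i b i ^+ 2).
Proof.
have H : 0 <= \sum_i \sum_j (a i * b j - a j * b i) ^+ 2.
  by apply: sumr_ge0 => i _; apply: sumr_ge0 => j _; exact: sqr_ge0.
have E i j : (a i * b j - a j * b i) ^+ 2 =
   a i ^+ 2 * b j ^+ 2 + a j ^+ 2 * b i ^+ 2 - 2 * (a i * b i * (a j * b j)).
  by ring.
suff E2 : \sum_i \sum_j (a i * b j - a j * b i) ^+ 2 =
   2 * ((\sum_i a i ^+ 2) * (\sum_i b i ^+ 2)) - 2 * (\sum_i a i * b i) ^+ 2.
  rewrite E2 in H; lra.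
under eq_bigr do under eq_bigr do rewrite E.
under eq_bigr do rewrite sumrB big_split /= -mulr_sumr.
rewrite sumrB big_split /=.
under [X in _ + X - _]eq_bigr do rewrite -mulr_suml.
under [X in _ - X]eq_bigr do rewrite -mulr_sumr -mulr_sumr.
rewrite -[X in X + _ - _]mulr_suml -[X in _ + X - _]mulr_sumr -[X in _ - X]mulr_sumr -[X in _ - _ * X]mulr_suml expr2.
ring.
Qed.

Section PartA.
Context {R : realType} {d : nat}.
Local Notation V := ('rV[R]_d).
Implicit Types (C : set (mark R d)) (x y z : V).

Lemma enorm_ge0 x : 0 <= enorm x.
Proof. exact: sqrtr_ge0. Qed.

Lemma enorm0 : enorm (0 : V) = 0.
Proof. by rewrite /enorm big1 ?sqrtr0 // => i _; rewrite mxE expr0n. Qed.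

Lemma enormN x : enorm (- x) = enorm x.
Proof. by rewrite /enorm; congr Num.sqrt; apply: eq_bigr => i _; rewrite mxE sqrrN. Qed.

Lemma enormD x y : enorm (x + y) <= enorm x + enorm y.
Proof.
rewrite /enorm.
set A := \sum_i x 0 i ^+ 2; set B := \sum_i y 0 i ^+ 2.
set Cs := \sum_i x 0 i * y 0 i.
have -> : \sum_i (x + y) 0 i ^+ 2 = A + B + 2 * Cs.
  rewrite /A /B /Cs mulr_sumr -!big_split /=; apply: eq_bigr => i _; rewrite mxE; ring.
have hA : 0 <= A by apply: sumr_ge0 => i _; exact: sqr_ge0.
have hB : 0 <= B by apply: sumr_ge0 => i _; exact: sqr_ge0.
have cs' : Cs ^+ 2 <= A * B := @cs R d (fun i => x 0 i) (fun i => y 0 i).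
have sa := sqrtr_ge0 A; have sb := sqrtr_ge0 B.
rewrite -(ger0_norm (addr_ge0 sa sb)) -sqrtr_sqr; apply: ler_wsqrtr.
have eA := sqr_sqrtr hA; have eB := sqr_sqrtr hB.
have : Cs ^+ 2 <= (Num.sqrt A * Num.sqrt B) ^+ 2 by rewrite exprMn eA eB.
move: eA eB; set a := Num.sqrt A; set b := Num.sqrt B => eA eB h.
rewrite -eA -eB in cs' *.
have hab : 0 <= a * b by exact: mulr_ge0.
have : Cs <= a * b by nra.
nra.
Qed.

Lemma enorm_tri x y z : enorm (z - x) <= enorm (y - x) + enorm (z - y).
Proof.
have -> : z - x = (y - x) + (z - y) by rewrite [RHS]addrC addrA subrK.
exact: enormD.
Qed.

Lemma enormB x y : enorm (x - y) = enorm (y - x).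
Proof. by rewrite -enormN opprB. Qed.

End PartA.

Section PartB.
Context {R : realType} {d : nat}.
Local Notation V := ('rV[R]_d).
Implicit Types (C : set (mark R d)) (x y z : V) (alpha : R).

Definition good C := forall p q, C p -> C q -> p.1.1 = q.1.1 -> p = q.
Definition pos C := forall p, C p -> 0 <= p.1.2 /\ 0 < p.2.

Local Open Scope ereal_scope.

Lemma tau_ge0 C x y : pos C -> 0 <= tau C x y.
Proof.
move=> hC; rewrite /tau; case: eqP => // _; apply/ereal_infP => e [t [r [Ct _]] <-].
by rewrite lee_fin; exact: (hC _ Ct).1.
Qed.

Lemma tau_fin C x y t : good C -> x != y -> tau C x y = t%:E ->
  exists r, C (x, t, r) /\ (enorm (y - x) <= r)%R.
Proof.
move=> hG xy; rewrite /tau (negbTE xy).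
have [[t0 [r0 [C0 n0]]]|N] := pselect (exists t0 r0, C (x, t0, r0) /\ (enorm (y - x) <= r0)%R).
  have -> : [set t%:E | t in [set t : R | exists r, C (x, t, r) /\ (enorm (y - x) <= r)%R]]
      = [set t0%:E].
    apply/seteqP; split => [e [t1 [r1 [C1 _]] <-]|e ->].
      by case: (hG _ _ C1 C0 erefl) => -> _.
    by exists t0 => //; exists r0.
  by rewrite ereal_inf1 => -[<-]; exists r0.
have -> : [set t%:E | t in [set t : R | exists r, C (x, t, r) /\ (enorm (y - x) <= r)%R]]
    = set0.
  by apply/seteqP; split => // e [t1 [r1 H] _]; apply: N; exists t1, r1.
by rewrite ereal_inf0.
Qed.

Local Close Scope ereal_scope.

Lemma rad_ge0 C alpha x : pos C -> 0 <= Defs.rad alpha C x.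
Proof.
move=> hC; rewrite /Defs.rad; case: xgetP => // r _ [t [_ Ct]].
exact: ltW (hC _ Ct).2.
Qed.

Lemma rad_eq C alpha x t r : good C -> C (x, t, r) -> t <= alpha * r ->
  Defs.rad alpha C x = r.
Proof.
move=> hG Ct tle; rewrite /Defs.rad; apply: xget_unique; first by exists t.
by move=> r' [t' [_ Ct']]; have := hG _ _ Ct' Ct erefl => -[].
Qed.

Lemma step C alpha x y t : good C -> pos C -> 0 < alpha ->
  tau C x y = t%:E -> enorm (y - x) <= Defs.rad alpha C x + t / alpha.
Proof.
move=> hG hC ha; have [<-|xy] := eqVneq x y.
  rewrite /tau eqxx => -[<-]; rewrite subrr enorm0 mul0r addr0; exact: (@rad_ge0 C).
move=> ht; have [r [Ct nr]] := @tau_fin C x y t hG xy ht.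
have [t0 r0] := hC _ Ct; rewrite /= in t0 r0.
have hr := @rad_ge0 C alpha x hC.
have [tle|tgt] := leP t (alpha * r).
  rewrite (@rad_eq C alpha x t r hG Ct tle); have : 0 <= t / alpha by exact: divr_ge0 (ltW ha).
  lra.
have : r < t / alpha by rewrite ltr_pdivlMr // mulrC.
lra.
Qed.

Lemma pt_cons C x0 y s : path_time C x0 (y :: s) = (tau C x0 y + path_time C y s)%E.
Proof. by rewrite /path_time /= big_cons. Qed.

Lemma pl_cons x0 y s : path_len x0 (y :: s) = enorm (y - x0) + path_len y s.
Proof. by rewrite /path_len /= big_cons. Qed.

Lemma pA_cons C alpha x0 y s : path_A alpha C x0 (y :: s) = Defs.rad alpha C x0 + path_A alpha C y s.
Proof. by rewrite /path_A big_cons. Qed.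

Lemma pt_ge0 C x0 s : pos C -> (0 <= path_time C x0 s)%E.
Proof. by move=> hC; apply: sume_ge0 => p _; exact: tau_ge0. Qed.

Lemma pA_ge0 C alpha x0 s : pos C -> 0 <= path_A alpha C x0 s.
Proof. by move=> hC; apply: sumr_ge0 => p _; exact: (@rad_ge0 C). Qed.

Lemma pl_ge0 x0 s : 0 <= path_len x0 s.
Proof. by apply: sumr_ge0 => p _; exact: enorm_ge0. Qed.

Lemma path_bound C alpha (hG : good C) (hC : pos C) (ha : 0 < alpha) s :
  forall x0 T, path_time C x0 s = T%:E ->
  path_len x0 s <= path_A alpha C x0 s + T / alpha.
Proof.
elim: s => [|y s IH] x0 T.
  rewrite /path_time /path_len /path_A /= !big_nil big_cons big_nil => -[<-].
  rewrite mul0r !addr0; exact: (@rad_ge0 C).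
rewrite pt_cons pl_cons pA_cons.
have h1 := @tau_ge0 C x0 y hC; have h2 := @pt_ge0 C y s hC.
case E1 : (tau C x0 y) h1 => [t1| |] // h1; case E2 : (path_time C y s) h2 => [t2| |] // h2.
move=> [<-].
have := @step C alpha x0 y t1 hG hC ha E1; have := IH _ _ E2.
rewrite mulrDl; lra.
Qed.

End PartB.

Section PartC.
Context {R : realType} {d : nat}.
Local Notation V := ('rV[R]_d).
Implicit Types (C : set (mark R d)) (x y z : V) (alpha : R).

Lemma suffix C (hC : pos C) s : forall x0, uniq (x0 :: s) ->
  (enorm x0 <= 1 \/ has (fun z => enorm z <= 1) s) ->
  exists y0 s2, [/\ enorm y0 <= 1, all (fun z => ~~ (enorm z <= 1)) s2,
    last y0 s2 = last x0 s, uniq (y0 :: s2) &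
    (path_time C y0 s2 <= path_time C x0 s)%E].
Proof.
elim: s => [|y s IH] x0 hu.
  by case => // hx0; exists x0, [::]; split.
have [hy|hy] := boolP ((enorm y <= 1) || has (fun z => enorm z <= 1) s).
  move=> _; have hu' : uniq (y :: s) by case/andP: hu.
  have [y0 [s2 [h1 h2 h3 h4 h5]]] := IH y hu' (orP hy).
  exists y0, s2; split => //.
  rewrite pt_cons; apply: (le_trans h5); apply: leeDr; exact: tau_ge0.
move=> [hx0|]; last by move=> /= /orP[] h; rewrite h ?orbT in hy.
exists x0, (y :: s); split => //.
rewrite negb_or in hy; case/andP: hy => hy hs.
by rewrite /= hy /= all_predC.
Qed.

Lemma pl_rcons x0 s z : path_len x0 (rcons s z) = path_len x0 s + enorm (z - last x0 s).
Proof.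
elim: s x0 => [|y s IH] x0.
  by rewrite /path_len /= big_cons /= unlock /= addr0 add0r.
by rewrite rcons_cons !pl_cons IH addrA.
Qed.

Lemma pA_rcons C alpha x0 s z :
  path_A alpha C x0 (rcons s z) = path_A alpha C x0 s + Defs.rad alpha C z.
Proof.
by rewrite /path_A -rcons_cons -cats1 big_cat big_seq1.
Qed.

Lemma pl_last x0 s : enorm (last x0 s - x0) <= path_len x0 s.
Proof.
elim: s x0 => [|y s IH] x0.
  by rewrite /= subrr enorm0 /path_len big_nil.
rewrite pl_cons /=; apply: (le_trans (enorm_tri x0 y (last y s))).
by rewrite lerD2l.
Qed.

Lemma fresh (hd : (1 <= d)%N) (L : seq V) x (e0 : R) : 0 < e0 ->
  exists z, z \notin L /\ 0 < enorm (z - x) <= e0.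
Proof.
move=> he.
pose i0 : 'I_d := Ordinal hd.
pose u : V := \row_j (j == i0)%:R.
pose c (k : nat) : R := e0 / k.+1%:R.
pose zz k : V := x + c k *: u.
have nz k : enorm (zz k - x) = c k.
  rewrite /zz addrC addKr /enorm (bigD1 i0) //= big1 => [|j /negbTE ji].
    rewrite !mxE eqxx mulr1 addr0 sqrtr_sqr ger0_norm //.
    by apply: divr_ge0; [exact: ltW|exact: ler0n].
  by rewrite !mxE ji mulr0 expr0n.
have cinj : injective zz.
  move=> k l /(congr1 (fun w : V => w 0 i0)); rewrite /zz !mxE eqxx !mulr1.
  move/addrI; rewrite /c => /(mulfI (lt0r_neq0 he)) /invr_inj.
  by move/eqP; rewrite eqr_nat => /eqP [].
set S := map zz (iota 0 (size L).+1).
have uS : uniq S by rewrite map_inj_uniq // iota_uniq.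
have [/allP H|] := boolP (all (fun w => w \in L) S).
  have := uniq_leq_size uS H; by rewrite size_map size_iota ltnn.
rewrite -has_predC => /hasP [w /mapP [k _ ->] wL].
exists (zz k); split => //; rewrite nz /c.
apply/andP; split; first by apply: divr_gt0 => //; rewrite ltr0n.
by rewrite ler_pdivrMr ?ltr0n // ler_peMr ?ler1n // ltW.
Qed.

End PartC.

Section PartD.
Context {R : realType} {d : nat}.
Local Notation V := ('rV[R]_d).
Implicit Types (C : set (mark R d)) (x y z : V) (alpha : R).

Lemma core C alpha (hd : (1 <= d)%N) (hG : good C) (hC : pos C) (ha : 0 < alpha)
  x x0 s T e0 : ~ (enorm x <= 1) -> enorm x0 <= 1 -> uniq (x0 :: s) -> last x0 s = x ->
  path_time C x0 s = T%:E -> 0 < e0 ->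
  exists q : R, [/\ (q%:E <= S_l alpha C (enorm x))%E, 0 <= q &
     (1 - q) * enorm x - 1 <= T / alpha + q * e0].
Proof.
move=> nBx hx0 hu hl hT he.
have nx1 : 1 < enorm x by rewrite ltNge; apply/negP.
have T0 : 0 <= T by have := @pt_ge0 R d C x0 s hC; rewrite hT lee_fin.
have [y0 [s2 [hy0 hall hlast hu2 hpt]]] := @suffix R d C hC s x0 hu (or_introl hx0).
have [T2 hT2 T2le] : exists2 T2, path_time C y0 s2 = T2%:E & T2 <= T.
  move: hpt; rewrite hT; have := @pt_ge0 R d C y0 s2 hC.
  by case: (path_time C y0 s2) => [t| |] // _; rewrite lee_fin => ?; exists t.
have T20 : 0 <= T2 by have := @pt_ge0 R d C y0 s2 hC; rewrite hT2 lee_fin.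
have hb := @path_bound R d C alpha hG hC ha s2 y0 T2 hT2.
pose s' := if y0 == 0 then s2 else y0 :: s2.
have hu' : uniq (0 :: s').
  rewrite /s'; case: eqP => [<-|/eqP ny0] //.
  rewrite /= in hu2 *; rewrite hu2 andbT inE negb_or eq_sym ny0 /=.
  by apply/negP => /(allP hall); rewrite enorm0 ler01.
have hl' : last 0 s' = x.
  by rewrite /s'; case: eqP => [e|_] /=; [rewrite -e hlast hl|rewrite hlast hl].
have hlen' : path_len 0 s' = enorm y0 + path_len y0 s2.
  rewrite /s'; case: eqP => [->|_]; first by rewrite enorm0 add0r.
  by rewrite pl_cons subr0.
have hA' : path_A alpha C y0 s2 <= path_A alpha C 0 s'.
  rewrite /s'; case: eqP => [->|_] //.
  by rewrite pA_cons lerDr; exact: (@rad_ge0 R d C).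
have hge : enorm x <= path_len 0 s' by have := pl_last 0 s'; rewrite hl' subr0.
have [z [zn /andP[z0 ze]]] := @fresh R d hd (0 :: s') x e0 he.
pose s'' := rcons s' z.
have hu'' : uniq (0 :: s'') by rewrite /s'' -rcons_cons rcons_uniq zn hu'.
have hlen'' : path_len 0 s'' = path_len 0 s' + enorm (z - x) by rewrite pl_rcons hl'.
have hA'' : path_A alpha C 0 s'' = path_A alpha C 0 s' + Defs.rad alpha C z by rewrite pA_rcons.
have rz := @rad_ge0 R d C alpha z hC.
have L0 : 0 < path_len 0 s'' by rewrite hlen''; lra.
have A0 := @pA_ge0 R d C alpha 0 s'' hC.
exists (path_A alpha C 0 s'' / path_len 0 s''); split.
- apply: ereal_sup_ubound; exists s'' => //; split => //; rewrite hlen''; lra.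
- exact: divr_ge0 A0 (ltW L0).
set q := path_A alpha C 0 s'' / path_len 0 s''.
have q0 : 0 <= q by exact: divr_ge0 A0 (ltW L0).
have hq : path_A alpha C 0 s'' = q * path_len 0 s''.
  by rewrite /q divfK // lt0r_neq0.
have tt : T2 / alpha <= T / alpha by rewrite ler_pM2r // invr_gt0.
have t0 : 0 <= T / alpha by exact: divr_ge0 T0 (ltW ha).
move: hq; rewrite hA'' hlen'' => hq.
set L' := path_len 0 s' in hge hlen' hq *.
set Ls := path_len y0 s2 in hb hlen'.
set As := path_A alpha C y0 s2 in hb hA'.
set A' := path_A alpha C 0 s' in hA' hq.
set ez := enorm (z - x) in z0 ze hq.
set ta := T / alpha in tt t0 *.
set t2 := T2 / alpha in hb tt.
have key : L' <= 1 + q * (L' + ez) + ta by lra.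
have h1 : q * ez <= q * e0 by exact: ler_wpM2l.
have [q1|q1] := leP q 1.
  have : (1 - q) * enorm x <= (1 - q) * L' by apply: ler_wpM2l => //; lra.
  nra.
have : (1 - q) * enorm x <= 0 by apply: mulr_le0_ge0; lra.
nra.
Qed.

End PartD.

Section PartE.
Context {R : realType} {d : nat}.
Local Notation V := ('rV[R]_d).
Implicit Types (C : set (mark R d)) (x y z : V) (alpha : R).

Lemma det C alpha (hd : (1 <= d)%N) (hG : good C) (hC : pos C) (ha : 0 < alpha) x :
  ~ unit_ball x ->
  (pass_time C (@unit_ball R d) x * ((enorm x)^-1)%:E
      >= alpha%:E * (1 - S_l alpha C (enorm x) - ((enorm x)^-1)%:E))%E.
Proof.
move=> nBx.
have nBx' : ~ (enorm x <= 1) by [].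
have nx1 : 1 < enorm x by rewrite ltNge; apply/negP.
have nx0 : 0 < enorm x by exact: lt_trans ltr01 nx1.
have hv : forall x0 s, unit_ball x0 -> uniq (x0 :: s) -> last x0 s = x ->
    path_time C x0 s = +oo%E \/ exists T, path_time C x0 s = T%:E /\
    forall e0, 0 < e0 -> exists q : R, [/\ (q%:E <= S_l alpha C (enorm x))%E, 0 <= q &
     (1 - q) * enorm x - 1 <= T / alpha + q * e0].
  move=> x0 s hx0 hu hl; have := @pt_ge0 R d C x0 s hC.
  case E : (path_time C x0 s) => [T| |] // _; last by left.
  right; exists T; split => // e0 he.
  exact: (@core R d C alpha hd hG hC ha x x0 s T e0 nBx' hx0 hu hl E he).
case hS : (S_l alpha C (enorm x)) => [s| |].
- have key : ((alpha * ((1 - s) * enorm x - 1))%:E <= pass_time C (@unit_ball R d) x)%E.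
    apply/ereal_infP => v [x0 [s0 [hx0 [hu [hl ->]]]]].
    case: (hv x0 s0 hx0 hu hl) => [->|[T [-> hq]]]; first exact: leey.
    rewrite lee_fin.
    have [q1 [q1S q10 _]] := hq 1 ltr01.
    have s0' : 0 <= s by move: q1S; rewrite hS lee_fin => /(le_trans q10).
    suff h : (1 - s) * enorm x - 1 <= T / alpha.
      have := ler_wpM2l (ltW ha) h; rewrite mulrCA divff ?mulr1 //; exact: lt0r_neq0.
    apply/ler_addgt0Pr => e he.
    have s1 : 0 < s + 1 by lra.
    have [q [qS q0 hqe]] := hq (e / (s + 1)) (divr_gt0 he s1).
    have qs : q <= s by move: qS; rewrite hS lee_fin.
    set f := e / (s + 1) in hqe.
    have hf : f * (s + 1) = e by rewrite /f divfK // lt0r_neq0.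
    have f0 : 0 < f by exact: divr_gt0 he s1.
    have : s * f <= e by rewrite -hf; nra.
    have : (1 - s) * enorm x <= (1 - q) * enorm x by apply: ler_wpM2r; lra.
    have : q * f <= s * f by apply: ler_wpM2r; lra.
    lra.
  have -> : (alpha%:E * (1 - s%:E - (enorm x)^-1%:E) =
      (alpha * ((1 - s) * enorm x - 1))%:E * ((enorm x)^-1)%:E)%E.
    transitivity ((alpha * (1 - s - (enorm x)^-1))%:E); first by [].
    rewrite -EFinM; congr EFin; field; exact: lt0r_neq0.
  by apply: lee_wpmul2r => //; rewrite lee_fin invr_ge0 ltW.
- have -> : (1 - +oo - ((enorm x)^-1)%:E = -oo :> \bar R)%E by [].
  by rewrite gt0_muleNy ?lte_fin // leNye.
- have -> : pass_time C (@unit_ball R d) x = +oo%E.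
    apply/ereal_inf_pinfty => v [x0 [s0 [hx0 [hu [hl ->]]]]].
    case: (hv x0 s0 hx0 hu hl) => [->|[T [_ hq]]] //.
    have [q [qS _ _]] := hq 1 ltr01.
    by move: qS; rewrite hS leeNy_eq.
  by rewrite gt0_mulye ?lte_fin ?invr_gt0 // leey.
Qed.

End PartE.

Section PartF.
Context {R : realType} {d : nat}.
Local Notation V := ('rV[R]_d).

Lemma card01 (T : Type) (X : set T) : (X #= `I_0)%card -> (X #= `I_1)%card -> False.
Proof.
move=> h0 h1; have := card_eq_trans (card_esym h0) h1.
by move/card_eq_II.
Qed.

Lemma not_card0 (T : Type) (X : set T) p : X p -> ~ (X #= `I_0)%card.
Proof. by move=> Xp; rewrite II0 card_eq0 => /eqP X0; rewrite X0 in Xp. Qed.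

Lemma not_card1 (T : Type) (X : set T) p q : X p -> X q -> p <> q -> ~ (X #= `I_1)%card.
Proof.
move=> Xp Xq pq /card_bijP [f [g fg _]].
have h : forall y1 y2 : `I_1, y1 = y2.
  move=> y1 y2; apply: val_inj; have := set_valP y1; have := set_valP y2.
  by rewrite /= => /ltnSE; rewrite leqn0 => /eqP -> /ltnSE; rewrite leqn0 => /eqP ->.
pose P' : X := SigSub (mem_set Xp); pose Q' : X := SigSub (mem_set Xq).
have : P' = Q' by rewrite -(fg P') -(fg Q') (h (f P') (f Q')).
by move/(congr1 val).
Qed.

Variables (dO : measure_display) (Omega : measurableType dO) (P : probability Omega R)
  (mu : probability R R) (chi : Omega -> set (mark R d)).
Hypothesis hchi : is_PPP P mu chi.

Lemma single (a b : V) (s t c e : R) (k : nat) :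
 (forall i, a 0 i < b 0 i) -> 0 <= s < t -> 0 <= c < e ->
 measurable (count_eq chi (box a b s t c e) k) /\
 P (count_eq chi (box a b s t c e) k) =
   (ppmf ((\prod_(i < d) (b 0 i - a 0 i)) * (t - s) * fine (mu `]c, e]%classic)) k)%:E.
Proof.
move=> hab hst hce; have [_ H] := hchi.
have [||hm hP] := H 1%N (fun _ => a) (fun _ => b) (fun _ => s) (fun _ => t)
   (fun _ => c) (fun _ => e) (fun _ => k).
- by move=> j; split.
- by move=> j j'; rewrite !ord1 eqxx.
split; first exact: hm ord0.
move: hP; rewrite big_ord1 bigcap_const //; by exists ord0.
Qed.

Lemma ppmf_bound (l : R) : 0 <= l -> 1 - (ppmf l 0 + ppmf l 1) <= l ^+ 2.
Proof.
move=> l0.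
have e0 : ppmf l 0 = expR (- l) by rewrite /ppmf fact0 mulr1n expr0 mulr1 divr1.
have f1 : 1`! = 1%N by [].
have e1 : ppmf l 1 = expR (- l) * l by rewrite /ppmf f1 mulr1n expr1 divr1.
rewrite e0 e1; have := expR_ge1Dx (- l); nra.
Qed.

Lemma two_bound (a b : V) (s t c e : R) :
 (forall i, a 0 i < b 0 i) -> 0 <= s < t -> 0 <= c < e ->
 measurable (~` (count_eq chi (box a b s t c e) 0 `|` count_eq chi (box a b s t c e) 1)) /\
 (P (~` (count_eq chi (box a b s t c e) 0 `|` count_eq chi (box a b s t c e) 1)) <=
   (((\prod_(i < d) (b 0 i - a 0 i)) * (t - s) * fine (mu `]c, e]%classic)) ^+ 2)%:E)%E.
Proof.
move=> hab hst hce.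
have [m0 P0] := @single a b s t c e 0 hab hst hce; have [m1 P1] := @single a b s t c e 1 hab hst hce.
have mU := measurableU _ _ m0 m1.
split; first exact: measurableC.
have dis : count_eq chi (box a b s t c e) 0 `&` count_eq chi (box a b s t c e) 1 = set0.
  by apply/seteqP; split => // w [h0 h1]; exact: card01 h0 h1.
rewrite probability_setC // measureU // [X in (_ - (X + _))%E]P0 [X in (_ - (_ + X))%E]P1.
set l := _ * _ * _.
have l0 : 0 <= l.
  rewrite /l; apply: mulr_ge0; first apply: mulr_ge0.
  - by apply: prodr_ge0 => i _; rewrite subr_ge0 ltW.
  - by case/andP: hst => _ /ltW; rewrite subr_ge0.
  - by apply: fine_ge0; exact: measure_ge0.
apply: (@le_trans _ _ ((1 - (ppmf l 0 + ppmf l 1))%:E)); first exact: le_refl.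
rewrite lee_fin; exact: ppmf_bound.
Qed.

End PartF.

Definition inregM {R : realType} {d : nat} (M : nat) (p : mark R d) : Prop :=
  (forall i, - (M.+1%:R) <= p.1.1 0 i < M.+1%:R) /\ p.1.2 < M.+1%:R /\ p.2 <= M.+1%:R.
Definition goodM {R : realType} {d : nat} (M : nat) (C : set (mark R d)) :=
  forall p q, C p -> C q -> p.1.1 = q.1.1 -> inregM M p -> inregM M q -> p = q.

Section PartG.
Context {R : realType} {d : nat}.
Local Notation V := ('rV[R]_d).
Variables (dO : measure_display) (Omega : measurableType dO) (P : probability Omega R)
  (mu : probability R R) (chi : Omega -> set (mark R d)).
Hypothesis hchi : is_PPP P mu chi.
Hypothesis hd : (1 <= d)%N.
Variable M : nat.

Let Mr : R := M.+1%:R.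
Let Mr0 : 0 < Mr. Proof. by rewrite ltr0n. Qed.
Let i0 : 'I_d := Ordinal hd.
Let h (n : nat) : R := (n.+1%:R)^-1.
Let h0 n : 0 < h n. Proof. by rewrite invr_gt0 ltr0n. Qed.
Let av n k : V := \row_i (if i == i0 then - Mr + k%:R * h n else - Mr).
Let bv n k : V := \row_i (if i == i0 then - Mr + k.+1%:R * h n else Mr).
Let bx n k := box (av n k) (bv n k) 0 Mr 0 Mr.
Let Ev n k := ~` (count_eq chi (bx n k) 0 `|` count_eq chi (bx n k) 1).
Let mm n := (2 * M.+1 * n.+1)%N.
Let U n := \big[setU/set0]_(k < mm n) Ev n k.
Let K : R := \prod_(i < d | i != i0) (Mr - - Mr).

Let hab n k : forall i, av n k 0 i < bv n k 0 i.
Proof.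
move=> i; rewrite !mxE; have := Mr0; case: eqP => _; last lra.
rewrite -natr1 mulrDl mul1r; have := h0 n; lra.
Qed.

Let hst : (0:R) <= 0 < Mr. Proof. by rewrite lexx Mr0. Qed.

Let Ev_bound n k : measurable (Ev n k) /\ (P (Ev n k) <= ((h n * K * Mr) ^+ 2)%:E)%E.
Proof.
have [mE PE] := @two_bound R d dO Omega P mu chi hchi _ _ _ _ _ _ (hab n k) hst hst.
split => //; apply: (le_trans PE); rewrite lee_fin.
have hK : \prod_(i < d) (bv n k 0 i - av n k 0 i) = h n * K.
  rewrite (bigD1 i0) //= !mxE eqxx; congr (_ * _).
    by rewrite -natr1 mulrDl mul1r; ring.
  by apply: eq_bigr => i /negbTE hi; rewrite !mxE hi.
rewrite hK subr0.
set f := fine _.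
have K0 : 0 <= K by apply: prodr_ge0 => i _; have := Mr0; lra.
have f01 : 0 <= f <= 1.
  have m1 : (mu `]0%R, Mr]%classic <= 1)%E by apply: probability_le1; exact: measurable_itv.
  have m0 : (0 <= mu `]0%R, Mr]%classic)%E by exact: measure_ge0.
  rewrite /f; move: m1 m0; case: (mu _) => [r| |] //=; rewrite !lee_fin => -> ->.
  by [].
have hh := h0 n.
have Mr0p := Mr0.
have x0 : 0 <= h n * K * Mr by apply: mulr_ge0; [apply: mulr_ge0; lra|lra].
case/andP: f01 => f0 f1.
rewrite ler_sqr ?nnegrE //; last by apply: mulr_ge0.
by rewrite ler_piMr.
Qed.

Let U_bound n : measurable (U n) /\ (P (U n) <= ((mm n)%:R * (h n * K * Mr) ^+ 2)%:E)%E.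
Proof.
have mU : measurable (U n) by apply: bigsetU_measurable => k _; exact: (Ev_bound n k).1.
split => //.
apply: (le_trans (@content_subadditive dO R Omega P (U n) (Ev n) (mm n) _ mU _)).
- by move=> k _; exact: (Ev_bound n k).1.
- by [].
have -> : (((mm n)%:R * (h n * K * Mr) ^+ 2)%:E = \sum_(k < mm n) ((h n * K * Mr) ^+ 2)%:E)%E.
  by rewrite sumEFin sumr_const card_ord mulr_natl.
by apply: lee_sum => k _; exact: (Ev_bound n k).2.
Qed.

Let N := \bigcap_n U n.
Let mN : measurable N.
Proof. by apply: bigcapT_measurable => n; exact: (U_bound n).1. Qed.

Let PN : P N = 0%E.
Proof.
pose D := 2 * Mr * (K * Mr) ^+ 2.
have hle n : (P N <= (D * h n)%:E)%E.
  have h1 : (P N <= P (U n))%E.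
    apply: le_measure; rewrite ?inE //; first exact: (U_bound n).1.
    by move=> w Nw; exact: Nw n I.
  apply: (le_trans h1); apply: (le_trans (U_bound n).2); rewrite lee_fin.
  suff -> : (mm n)%:R * (h n * K * Mr) ^+ 2 = D * h n by [].
  rewrite /mm /D /h /Mr !natrM.
  field; by rewrite nat1r pnatr_eq0.
have P0 : (0 <= P N)%E by exact: measure_ge0.
have := hle 0%N; move: P0.
case E : (P N) => [x| |] //=; rewrite !lee_fin => x0 _.
suff -> : x = 0 by []. apply/eqP; rewrite eq_le x0 andbT.
have D0 : 0 <= D by rewrite /D; have := Mr0; move=> ?; apply: mulr_ge0; [lra|exact: sqr_ge0].
rewrite leNgt; apply/negP => xp.
pose n := Num.truncn (D / x).
have hn : D / x < n.+1%:R := truncnS_gt (D / x).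
have := hle n; rewrite E lee_fin /h.
rewrite ltr_pdivrMr // in hn.
move=> hx; have := ler_wpM2r (ler0n _ n.+1) hx.
have -> : D * n.+1%:R^-1 * n.+1%:R = D by rewrite mulfVK // pnatr_eq0.
lra.
Qed.

Let kidx n (p : mark R d) := Num.truncn ((p.1.1 0 i0 + Mr) * n.+1%:R).

Let inbox n p : 0 <= p.1.2 /\ 0 < p.2 -> inregM M p ->
  bx n (kidx n p) p /\ (kidx n p < mm n)%N.
Proof.
move=> [t0 r0] [hc [ht hr]].
have hc0 := hc i0.
have Mr0p := Mr0; have hh := h0 n.
have y0 : 0 <= (p.1.1 0 i0 + Mr) * n.+1%:R.
  by apply: mulr_ge0; [rewrite /Mr; lra|exact: ler0n].
have /andP[ky1 ky2] := truncn_itv y0.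
have hy : (p.1.1 0 i0 + Mr) * n.+1%:R * h n = p.1.1 0 i0 + Mr.
  by rewrite /h mulfK // pnatr_eq0.
split.
- split; last by split; apply/andP; split.
  move=> i; rewrite !mxE; case: eqP => [->|_]; last exact: hc i.
  have a1 := ler_wpM2r (ltW hh) ky1.
  have a2 : (p.1.1 0 i0 + Mr) * n.+1%:R * h n < (Num.truncn ((p.1.1 0 i0 + Mr) * n.+1%:R)).+1%:R * h n.
    by rewrite ltr_pM2r.
  rewrite hy in a1 a2; rewrite /kidx; apply/andP; split; lra.
- rewrite /kidx truncn_lt_nat // /mm !natrM -/Mr.
  rewrite ltr_pM2r ?ltr0n //; move: hc0; rewrite -/Mr; lra.
Qed.

Lemma aeM : {ae P, forall w, goodM M (chi w)}.
Proof.
exists N; split; [exact: mN | exact: PN |].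
move=> w /= ng; apply: contrapT => nN; apply: ng => p q Cp Cq e rp rq.
apply: contrapT => npq; apply: nN => n _.
have [bp kp] := inbox n p (hchi.1 w p Cp) rp; have [bq kq] := inbox n q (hchi.1 w q Cq) rq.
have kq' : kidx n q = kidx n p by rewrite /kidx e.
rewrite /U -bigcup_mkord; exists (kidx n p) => //.
rewrite kq' in bq.
rewrite /Ev => -[hz|hu].
- exact: (@not_card0 _ (chi w `&` bx n (kidx n p)) p (conj Cp bp)) hz.
- exact: (@not_card1 _ (chi w `&` bx n (kidx n p)) p q (conj Cp bp) (conj Cq bq) npq) hu.
Qed.

End PartG.

Lemma good_of_goodM {R : realType} {d : nat} (C : set (mark R d)) :
  (forall M, goodM M C) -> good C.
Proof.
move=> H p q Cp Cq e.
pose K := \sum_i `|p.1.1 0 i| + `|p.1.2| + `|q.1.2| + `|p.2| + `|q.2|.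
pose M := Num.truncn K.
have hK : K < M.+1%:R := truncnS_gt K.
have hs i : `|p.1.1 0 i| <= \sum_i `|p.1.1 0 i|.
  by rewrite (bigD1 i) //= lerDl; apply: sumr_ge0 => j _.
have n1 := normr_ge0 (p.1.2); have n2 := normr_ge0 (q.1.2).
have n3 := normr_ge0 (p.2); have n4 := normr_ge0 (q.2).
have n0 : 0 <= \sum_i `|p.1.1 0 i| by apply: sumr_ge0 => j _.
have reg (r : mark R d) : r.1.1 = p.1.1 -> `|r.1.2| <= `|p.1.2| + `|q.1.2| ->
    `|r.2| <= `|p.2| + `|q.2| -> inregM M r.
  move=> er e1 e2; split; last split.
  - move=> i; have := hs i; rewrite er; move=> hi.
    have : `|p.1.1 0 i| < M.+1%:R by rewrite /K in hK; lra.
    by rewrite ltr_norml => /andP[a b]; rewrite b (ltW a).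
  - have := ler_norm r.1.2; rewrite /K in hK; lra.
  - have := ler_norm r.2; rewrite /K in hK; lra.
apply: (H M) => //; apply: reg => //; lra.
Qed.

Theorem lemma2p4 (R : realType) (d : nat) (hd : (1 <= d)%N)
  (mu : probability R R) (hmu : mu `]0, +oo[%classic = 1%E)
  (alpha : R) (halpha : 0 < alpha)
  (dO : measure_display) (Omega : measurableType dO) (P : probability Omega R)
  (chi : Omega -> set (mark R d)) (hchi : is_PPP P mu chi) :
  {ae P, forall w, forall x : 'rV[R]_d, ~ unit_ball x ->
     (pass_time (chi w) (@unit_ball R d) x * ((enorm x)^-1)%:E
      >= alpha%:E * (1 - S_l alpha (chi w) (enorm x) - ((enorm x)^-1)%:E))%E}.
Proof.
have hpos : forall w, pos (chi w) := fun w p Cp => hchi.1 w p Cp.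
have hg : {ae P, forall w, forall M, goodM M (chi w)}.
  by apply: ae_foralln => M; exact: (@aeM R d dO Omega P mu chi hchi hd M).
apply: filterS hg => w hw x nBx.
apply: (@det R d (chi w) alpha hd _ (hpos w) halpha x nBx).
exact: good_of_goodM.
Qed.
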